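(* Let $n\ge 2$, $a,b\in\mathbb{Z}_n$, $Q=Q_{a,b}(\mathbb{Z}_n)$, and $x=(x_1,x_2,x_3)$, $y=(y_1,y_2,y_3)$, $z=(z_1,z_2,z_3)\in Q$. Then: (i) $x\backslash y=(y_1-x_1-(y_3-x_3)x_3y_2-a(x_2,y_2-x_2)_n-b(x_3,y_3-x_3)_n,\ y_2-x_2,\ y_3-x_3)$; (ii) $(xy)\backslash(x(yz))=(z_1+y_3(x_3z_2-x_2z_3),\ z_2,\ z_3)$; (iii) $Q$ is a nonassociative commutative A-loop of order $n^3$; (iv) $N_\lambda(Q)=Z(Q)=\mathbb{Z}_n\times 0\times 0$ and $N_\mu(Q)=\mathbb{Z}_n\times\mathbb{Z}_n\times 0$ as subsets of $Q$; (v) $Q/Z(Q)\cong\mathrm{Inn}(Q)\cong\mathbb{Z}_n\times\mathbb{Z}_n$, and $\mathrm{Inn}(Q)=\{L_{u,v}:u,v\in Q\}$; (vi) for every integer $m\ge0$, $x^m=\big(mx_1+2\binom{m+1}{3}x_2x_3^2+at_2+bt_3,\ mx_2,\ mx_3\big)$, where $t_i=\sum_{k=1}^{m-1}(x_i,kx_i)_n$ (the sum is empty and the binomial coefficient is $0$ when $m<2$).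
   Context: Identify $\mathbb{Z}_n$ with $\{0,1,\dots,n-1\}$; all coordinate arithmetic is in $\mathbb{Z}_n$. The overflow indicator is $(x,y)_n=1$ if $x+y\ge n$ as integers and $(x,y)_n=0$ otherwise. For $a,b\in\mathbb{Z}_n$, $Q_{a,b}(\mathbb{Z}_n)$ is the set $\mathbb{Z}_n^3$ with multiplication $(x_1,x_2,x_3)(y_1,y_2,y_3)=(x_1+y_1+(x_2+y_2)x_3y_3+a(x_2,y_2)_n+b(x_3,y_3)_n,\ x_2+y_2,\ x_3+y_3)$; it is a commutative loop with neutral element $(0,0,0)$. $u\backslash w$ denotes the unique $z$ with $uz=w$; $L_{u,v}=L_{vu}^{-1}L_vL_u$. $\mathrm{Inn}(Q)$ is the group generated by $L_{x,y}$, $R_{x,y}=R_{xy}^{-1}R_yR_x$, $T_x=L_x^{-1}R_x$; an A-loop is a loop whose inner mappings are automorphisms. Nuclei: $N_\lambda=\{x:(xy)z=x(yz)\ \forall y,z\}$, $N_\mu=\{y:(xy)z=x(yz)\ \forall x,z\}$; $Z(Q)$ is the center. Powers are well defined as the loop is power-associative. *)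

(* Defs.v *)
From HB Require Import structures.
From mathcomp Require Import all_boot all_order all_algebra all_fingroup.
Set Implicit Arguments. Unset Strict Implicit. Unset Printing Implicit Defensive.
Import GRing.Theory.

Section LoopNotions.
Variables (T : finType) (op : T -> T -> T).
Local Open Scope group_scope.

Definition ldiv (u w : T) : T := odflt w [pick z | op u z == w].
Definition rdiv (w u : T) : T := odflt w [pick z | op z u == w].

Definition is_loop (e : T) : Prop :=
  (forall x, op e x = x /\ op x e = x) /\
  (forall u w, exists! z, op u z = w) /\
  (forall u w, exists! z, op z u = w).

(* inner mappings, as functions; composition is right-to-left *)
Definition Lmap (u v : T) : T -> T := fun w => ldiv (op v u) (op v (op u w)).
Definition Rmap (u v : T) : T -> T := fun w => rdiv (op (op w u) v) (op u v).
Definition Tmap (u : T) : T -> T := fun w => ldiv u (op w u).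

(* a bijective self-map of T as a permutation (identity if not injective;
   in a loop all the maps above are bijective) *)
Definition fperm (f : T -> T) : {perm T} :=
  match injectiveP f with ReflectT H => perm H | ReflectF _ => 1 end.

Definition Lset : {set {perm T}} := [set fperm (Lmap u v) | u in T, v in T].

Definition Inn : {set {perm T}} :=
  << Lset :|: [set fperm (Rmap u v) | u in T, v in T]
          :|: [set fperm (Tmap u) | u in T] >>.

Definition is_Aloop (e : T) : Prop :=
  is_loop e /\ forall p, p \in Inn -> forall x y, p (op x y) = op (p x) (p y).

Definition commutative_op : Prop := forall x y, op x y = op y x.
Definition associative_op : Prop := forall x y z, op (op x y) z = op x (op y z).

Definition Nlam : {set T} := [set x | [forall y, forall z, op (op x y) z == op x (op y z)]].
Definition Nmu : {set T} := [set y | [forall x, forall z, op (op x y) z == op x (op y z)]].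
Definition Nrho : {set T} := [set z | [forall x, forall y, op (op x y) z == op x (op y z)]].
Definition Zc : {set T} :=
  [set x | [forall y, op x y == op y x] && (x \in Nlam) && (x \in Nmu) && (x \in Nrho)].

Definition zcoset (x : T) : {set T} := [set op x z | z in Zc].
Definition quotZ : {set {set T}} := [set zcoset x | x in T].

Definition qexp (e x : T) (m : nat) : T := iter m (fun y => op y x) e.
End LoopNotions.

Local Open Scope ring_scope.

Notation Qt n := ('Z_n * 'Z_n * 'Z_n)%type.

Definition ovf (n : nat) (x y : 'Z_n) : 'Z_n := (nat_of_bool (n <= val x + val y)%N)%:R.

Definition mulQ (n : nat) (a b : 'Z_n) (x y : Qt n) : Qt n :=
  let: (x1, x2, x3) := x in let: (y1, y2, y3) := y in
  (x1 + y1 + (x2 + y2) * x3 * y3 + a * ovf x2 y2 + b * ovf x3 y3, x2 + y2, x3 + y3).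

Definition addZ2 (n : nat) (p q : 'Z_n * 'Z_n) : 'Z_n * 'Z_n := (p.1 + q.1, p.2 + q.2).

(* Main.v *)
Require Import Defs.
From HB Require Import structures.
From mathcomp Require Import all_boot all_order all_algebra all_fingroup.
From Stdlib Require Import Ring Lia.
Import GRing.Theory.
Local Open Scope ring_scope.

Section S.
Variable n' : nat.
Local Notation N := n'.+2.
Local Notation Z := 'Z_N.
Definition zadd (x y : Z) : Z := x + y.
Definition zmul (x y : Z) : Z := x * y.
Definition zopp (x : Z) : Z := - x.
Definition zsub (x y : Z) : Z := x - y.
Definition zzero : Z := 0.
Definition zone : Z := 1.
Definition znat (k : nat) : Z := k%:R.
Lemma Zrt : @ring_theory Z zzero zone zadd zmul zsub zopp (@eq Z).
Proof.
split; rewrite /zadd /zmul /zsub /zopp /zzero /zone.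
exact: add0r. exact: addrC. exact: addrA. exact: mul1r. exact: mulrC. exact: mulrA. exact: mulrDl. by []. exact: subrr.
Qed.
Add Ring Zring : Zrt.
Lemma zaddE (x y : Z) : x + y = zadd x y. Proof. by []. Qed.
Lemma zmulE (x y : Z) : x * y = zmul x y. Proof. by []. Qed.
Lemma zoppE (x : Z) : - x = zopp x. Proof. by []. Qed.
Lemma zzeroE : 0 = zzero :> Z. Proof. by []. Qed.
Lemma zoneE : 1 = zone :> Z. Proof. by []. Qed.
Lemma znatE k : k%:R = znat k :> Z. Proof. by []. Qed.
Lemma zmulnE (x : Z) k : x *+ k = zmul x (znat k). Proof. by rewrite /zmul /znat mulr_natr. Qed.
Lemma zhelp (x y : Z) : zadd x zzero = zadd y zzero -> x = y.
Proof. by rewrite /zadd /zzero !addr0. Qed.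
Ltac zring := rewrite ?mulr0n ?znatE ?zmulnE ?zaddE ?zmulE ?zoppE ?zzeroE ?zoneE;
  apply: zhelp; ring.
Variables a b : Z.
Local Notation T := (Qt N).
Local Notation mul := (@mulQ N a b).

Lemma valD (x y : Z) : val (x + y) = ((val x + val y) %% N)%N. Proof. by []. Qed.

Lemma modN s : (s < N + N)%N -> (s %% N = if (N <= s) then (s - N) else s)%N.
Proof.
move=> hs; case: (leqP N s) => h; last by rewrite modn_small.
rewrite -{1}(subnK h) modnDr modn_small // ltn_subLR //.
Qed.

Lemma ovf_cocycle (x y z : Z) :
  ovf x y + ovf (x + y) z = ovf y z + ovf x (y + z).
Proof.
rewrite /ovf !valD.
have hx : (val x < N)%N := ltn_ord x; have hy : (val y < N)%N := ltn_ord y; have hz : (val z < N)%N := ltn_ord z.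
move: (val x) (val y) (val z) hx hy hz => X Y W hx hy hz.
rewrite -!natrD; congr (_%:R).
move/ltP: hx; move/ltP: hy; move/ltP: hz => hz hy hx.
rewrite !modN; try (apply/ltP; rewrite -?plusE; lia).
repeat (case: leqP => /leP ?); simpl; unfold subn, subn_rec, addn, addn_rec in *; lia.
Qed.

Lemma mulE (x1 x2 x3 y1 y2 y3 : Z) : mul (x1, x2, x3) (y1, y2, y3) =
  (x1 + y1 + (x2 + y2) * x3 * y3 + a * ovf x2 y2 + b * ovf x3 y3, x2 + y2, x3 + y3).
Proof. by []. Qed.

Lemma ovf0 (x : Z) : ovf x 0 = 0.
Proof. by rewrite /ovf /= addn0 leqNgt ltn_ord. Qed.
Lemma ovfC (x y : Z) : ovf x y = ovf y x.
Proof. by rewrite /ovf addnC. Qed.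
Lemma ovf0l (x : Z) : ovf 0 x = 0.
Proof. by rewrite ovfC ovf0. Qed.

Lemma ovf_coc (x y z : Z) : ovf (x + y) z = ovf y z + ovf x (y + z) - ovf x y.
Proof. rewrite -ovf_cocycle; zring. Qed.

Lemma mulC (x y : T) : mul x y = mul y x.
Proof.
case: x => [[x1 x2] x3]; case: y => [[y1 y2] y3]; rewrite !mulE.
rewrite (ovfC x2) (ovfC x3); congr (_,_,_); zring.
Qed.

Definition shift (w : T) (d : Z) : T := (w.1.1 + d, w.1.2, w.2).

Lemma mul_shift u z d : mul u (shift z d) = shift (mul u z) d.
Proof.
case: u => [[u1 u2] u3]; case: z => [[z1 z2] z3]; rewrite /shift !mulE /=.
congr (_,_,_); zring.
Qed.

Lemma shift_shift w d e : shift (shift w d) e = shift w (d + e).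
Proof. by case: w => [[w1 w2] w3]; rewrite /shift /= addrA. Qed.
Lemma shift0 w : shift w 0 = w.
Proof. by case: w => [[w1 w2] w3]; rewrite /shift /= addr0. Qed.

Definition adef (x y z : T) : Z := y.2 * (x.2 * z.1.2 - x.1.2 * z.2).

Lemma massoc x y z : mul x (mul y z) = shift (mul (mul x y) z) (adef x y z).
Proof.
case: x => [[x1 x2] x3]; case: y => [[y1 y2] y3]; case: z => [[z1 z2] z3].
rewrite /adef /shift !mulE /=.
rewrite (ovf_coc x2 y2 z2) (ovf_coc x3 y3 z3).
congr (_,_,_); zring.
Qed.

Lemma mul_cancel u z z' : mul u z = mul u z' -> z = z'.
Proof.
case: u => [[u1 u2] u3]; case: z => [[z1 z2] z3]; case: z' => [[z1' z2'] z3'].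
rewrite !mulE => H; have h2 := congr1 (fun t => t.1.2) H; have h3 := congr1 (fun t => t.2) H; have h1 := congr1 (fun t => t.1.1) H; simpl in h1, h2, h3.
move/addrI: h2 => e2; move/addrI: h3 => e3; subst z2' z3'.
by move/addIr/addIr/addIr/addrI: h1 => ->.
Qed.

Lemma ldivE u z w : mul u z = w -> ldiv mul u w = z.
Proof.
move=> Hz; rewrite /ldiv; case: pickP => [z' /eqP Hz' | H].
  by apply: (@mul_cancel u); rewrite Hz Hz'.
by have := H z; rewrite /= Hz eqxx.
Qed.

Lemma rdivE u z w : mul z u = w -> rdiv mul w u = z.
Proof.
move=> Hz; rewrite /rdiv; case: pickP => [z' /eqP Hz' | H].
  by apply: (@mul_cancel u); rewrite mulC Hz' mulC Hz.
by have := H z; rewrite /= Hz eqxx.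
Qed.

Definition divf (x y : T) : T :=
  let: (x1, x2, x3) := x in let: (y1, y2, y3) := y in
  (y1 - x1 - (y3 - x3) * x3 * y2 - a * ovf x2 (y2 - x2) - b * ovf x3 (y3 - x3),
   y2 - x2, y3 - x3).

Lemma mul_divf x y : mul x (divf x y) = y.
Proof.
case: x => [[x1 x2] x3]; case: y => [[y1 y2] y3]; rewrite /divf mulE.
have e2 : x2 + (y2 - x2) = y2 by zring.
have e3 : x3 + (y3 - x3) = y3 by zring.
rewrite e2 e3; congr (_,_,_); zring.
Qed.

Lemma part1 x1 x2 x3 y1 y2 y3 :
  ldiv mul (x1, x2, x3) (y1, y2, y3) =
       (y1 - x1 - (y3 - x3) * x3 * y2 - a * ovf x2 (y2 - x2) - b * ovf x3 (y3 - x3),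
        y2 - x2, y3 - x3).
Proof. by apply: ldivE; exact: (mul_divf (x1, x2, x3) (y1, y2, y3)). Qed.

Lemma part2 x y z : ldiv mul (mul x y) (mul x (mul y z)) = shift z (adef x y z).
Proof. by apply: ldivE; rewrite mul_shift massoc. Qed.


Lemma loopP : is_loop mul (0, 0, 0).
Proof.
split; [|split].
- case=> [[x1 x2] x3]; rewrite !mulE !ovf0 !ovf0l; split; congr (_,_,_); zring.
- move=> u w; exists (divf u w); split; first exact: mul_divf.
  by move=> z Hz; apply: (@mul_cancel u); rewrite Hz mul_divf.
- move=> u w; exists (divf u w); split; first by rewrite mulC mul_divf.
  by move=> z Hz; apply: (@mul_cancel u); rewrite (mulC u z) Hz mul_divf.
Qed.

Definition Mf (al be : Z) (w : T) : T := (w.1.1 + al * w.1.2 + be * w.2, w.1.2, w.2).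

Lemma MfK al be : cancel (Mf al be) (Mf (- al) (- be)).
Proof. case=> [[w1 w2] w3]; rewrite /Mf /=; congr (_,_,_); zring. Qed.

Lemma Mf_inj al be : injective (Mf al be).
Proof. exact: can_inj (MfK al be). Qed.

Definition MP al be : {perm T} := perm (Mf_inj al be).

Lemma LmapE u v w : Lmap mul u v w = Mf (u.2 * v.2) (- (u.2 * v.1.2)) w.
Proof.
rewrite /Lmap part2; case: u => [[u1 u2] u3]; case: v => [[v1 v2] v3];
case: w => [[w1 w2] w3]; rewrite /shift /adef /Mf /=; congr (_,_,_); zring.
Qed.

Lemma RmapE u v w : Rmap mul u v w = Mf (u.2 * v.2) (- (u.2 * v.1.2)) w.
Proof.
rewrite /Rmap; apply: rdivE.
have -> : Mf (u.2 * v.2) (- (u.2 * v.1.2)) w = shift w (- adef w u v).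
  case: u => [[u1 u2] u3]; case: v => [[v1 v2] v3];
  case: w => [[w1 w2] w3]; rewrite /shift /adef /Mf /=; congr (_,_,_); zring.
by rewrite mulC mul_shift mulC massoc shift_shift addrN shift0.
Qed.

Lemma TmapE u w : Tmap mul u w = w.
Proof. by rewrite /Tmap; apply: ldivE; rewrite mulC. Qed.

Lemma fpermE (f : T -> T) (H : injective f) x : fperm f x = f x.
Proof.
rewrite /fperm; case: injectiveP => [Hi|Hn]; first by rewrite permE.
by case: Hn.
Qed.

Lemma fpermL u v : fperm (Lmap mul u v) = MP (u.2 * v.2) (- (u.2 * v.1.2)).
Proof.
have Hi : injective (Lmap mul u v).
  by apply: (eq_inj (Mf_inj (u.2 * v.2) (- (u.2 * v.1.2)))) => w; rewrite LmapE.
by apply/permP => w; rewrite fpermE // permE LmapE.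
Qed.

Lemma fpermR u v : fperm (Rmap mul u v) = MP (u.2 * v.2) (- (u.2 * v.1.2)).
Proof.
have Hi : injective (Rmap mul u v).
  by apply: (eq_inj (Mf_inj (u.2 * v.2) (- (u.2 * v.1.2)))) => w; rewrite RmapE.
by apply/permP => w; rewrite fpermE // permE RmapE.
Qed.

Lemma fpermT u : fperm (Tmap mul u) = 1%g.
Proof.
have Hi : injective (Tmap mul u).
  by apply: (@eq_inj _ _ id) => // w; rewrite TmapE.
by apply/permP => w; rewrite fpermE // perm1 TmapE.
Qed.

Lemma MP_mul al be ga de : (MP al be * MP ga de)%g = MP (al + ga) (be + de).
Proof.
apply/permP => w; rewrite permM !permE; case: w => [[w1 w2] w3].
rewrite /Mf /=; congr (_,_,_); zring.
Qed.

Lemma MP1 : MP 0 0 = 1%g.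
Proof.
apply/permP => w; rewrite permE perm1; case: w => [[w1 w2] w3].
rewrite /Mf /=; congr (_,_,_); zring.
Qed.

Definition Gs : {set {perm T}} := [set MP al be | al in Z, be in Z].

Lemma Gs_group : group_set Gs.
Proof.
apply/group_setP; split.
  by apply/imset2P; exists 0 0 => //; rewrite MP1.
move=> p q /imset2P [al be _ _ ->] /imset2P [ga de _ _ ->].
by rewrite MP_mul; apply/imset2P; exists (al + ga) (be + de).
Qed.

Canonical Gg := group Gs_group.

Lemma Lset_eq : Lset mul = Gs.
Proof.
apply/setP => p; apply/imset2P/imset2P.
  by case=> u v _ _ ->; rewrite fpermL; exists (u.2 * v.2) (- (u.2 * v.1.2)).
case=> al be _ _ ->; exists (0, 0, 1) (0, - be, al) => //.
by rewrite fpermL /= !mul1r opprK.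
Qed.

Lemma Inn_eq : Inn mul = Gs.
Proof.
apply/eqP; rewrite eqEsubset; apply/andP; split.
  rewrite (gen_subG _ Gg) /= !subUset Lset_eq subxx /=; apply/andP; split.
    apply/subsetP => p /imset2P [u v _ _ ->]; rewrite fpermR.
    by apply/imset2P; exists (u.2 * v.2) (- (u.2 * v.1.2)).
  apply/subsetP => p /imsetP [u _ ->]; rewrite fpermT -MP1.
  by apply/imset2P; exists 0 0.
rewrite -Lset_eq; apply: sub_gen; rewrite -setUA; exact: subsetUl.
Qed.

Lemma Inn_aut p : p \in Inn mul -> forall x y, p (mul x y) = mul (p x) (p y).
Proof.
rewrite Inn_eq => /imset2P [al be _ _ ->] x y; rewrite !permE.
case: x => [[x1 x2] x3]; case: y => [[y1 y2] y3]; rewrite /Mf !mulE /=.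
congr (_,_,_); zring.
Qed.


Lemma shift_eq w d : (w == shift w d) = (d == 0).
Proof.
case: w => [[w1 w2] w3]; rewrite /shift /=.
apply/eqP/eqP => [h|->]; last by rewrite addr0.
have := congr1 (fun t => t.1.1) h => /= h1.
by apply: (@addrI _ w1); rewrite addr0 -h1.
Qed.

Lemma assoc_iff x y z :
  (mul (mul x y) z == mul x (mul y z)) = (adef x y z == 0).
Proof. by rewrite massoc shift_eq. Qed.

Lemma one_neq0 : (1 : Z) != 0. Proof. exact: oner_neq0. Qed.

Lemma Nlam_eq : Nlam mul = [set x : T | (x.1.2 == 0) && (x.2 == 0)].
Proof.
apply/setP => x; rewrite !inE.
apply/idP/idP.
  move/forallP => h.
  have /forallP /(_ (0, 1, 0)) := h (0, 0, 1).
  have /forallP /(_ (0, 0, 1)) := h (0, 0, 1).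
  rewrite !assoc_iff /adef /= !mul1r !mulr1 !mulr0 sub0r subr0 oppr_eq0.
  by move=> -> ->.
case/andP => /eqP h2 /eqP h3; apply/forallP => y; apply/forallP => z.
by rewrite assoc_iff /adef h2 h3 !mul0r subrr mulr0.
Qed.

Lemma Nmu_eq : Nmu mul = [set x : T | x.2 == 0].
Proof.
apply/setP => y; rewrite !inE.
apply/idP/idP.
  move/forallP => h.
  have /forallP /(_ (0, 1, 0)) := h (0, 0, 1).
  by rewrite !assoc_iff /adef /= !mul1r !mulr0 subr0 mulr1.
move/eqP => h3; apply/forallP => x; apply/forallP => z.
by rewrite assoc_iff /adef h3 mul0r.
Qed.

Lemma Zc_eq : Zc mul = [set x : T | (x.1.2 == 0) && (x.2 == 0)].
Proof.
apply/setP => x; rewrite [in RHS]inE /Zc inE Nlam_eq Nmu_eq !inE.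
have [h|h] := boolP ((x.1.2 == 0) && (x.2 == 0)); last by rewrite andbF.
case/andP: h => /eqP h2 /eqP h3.
have c1 : [forall y, mul x y == mul y x] by apply/forallP => y; rewrite mulC.
have c2 : [forall u, forall v, mul (mul u v) x == mul u (mul v x)].
  apply/forallP => u; apply/forallP => v.
  by rewrite assoc_iff /adef h2 h3 !mulr0 subrr mulr0.
by rewrite c1 c2 h3 eqxx.
Qed.

Lemma zcosetE x : zcoset mul x = [set y : T | (y.1.2 == x.1.2) && (y.2 == x.2)].
Proof.
apply/setP => y; rewrite inE; apply/imsetP/idP.
  case=> z; rewrite Zc_eq inE => /andP [/eqP h2 /eqP h3] ->.
  case: x => [[x1 x2] x3]; case: z h2 h3 => [[z1 z2] z3] h2 h3; simpl in h2, h3; subst z2 z3.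
  by rewrite mulE !ovf0 /= !addr0 !eqxx.
case/andP => /eqP h2 /eqP h3.
exists (y.1.1 - x.1.1, 0, 0); first by rewrite Zc_eq inE /= eqxx.
case: x h2 h3 => [[x1 x2] x3]; case: y => [[y1 y2] y3] h2 h3; simpl in h2, h3; subst y2 y3.
rewrite mulE !ovf0 /=; congr (_,_,_); zring.
Qed.

Definition phi (S : {set T}) : Z * Z :=
  let p := odflt (0, 0, 0) [pick x in S] in (p.1.2, p.2).

Lemma phiE x : phi (zcoset mul x) = (x.1.2, x.2).
Proof.
rewrite /phi; case: pickP => [p | H] /=.
  by rewrite zcosetE inE => /andP [/eqP -> /eqP ->].
by have := H x; rewrite zcosetE inE !eqxx.
Qed.

Lemma quot_part :
  exists phi : {set T} -> Z * Z,
      {in quotZ mul &, injective phi} /\ phi @: quotZ mul = setT /\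
      (forall x y, phi (zcoset mul (mul x y)) =
                   addZ2 (phi (zcoset mul x)) (phi (zcoset mul y))).
Proof.
exists phi; split; [|split].
- move=> S1 S2 /imsetP [x _ ->] /imsetP [y _ ->]; rewrite !phiE => [[h2 h3]].
  by rewrite !zcosetE h2 h3.
- apply/setP => [[al be]]; rewrite inE; apply/imsetP.
  exists (zcoset mul (0, al, be)); first by apply/imsetP; exists (0, al, be).
  by rewrite phiE.
- move=> x y; rewrite !phiE; case: x => [[x1 x2] x3]; case: y => [[y1 y2] y3].
  by rewrite mulE.
Qed.

Definition psi (p : {perm T}) : Z * Z := ((p (0, 1, 0)).1.1, (p (0, 0, 1)).1.1).

Lemma psiE al be : psi (MP al be) = (al, be).
Proof. rewrite /psi !permE /Mf /=; congr (_,_); zring. Qed.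

Lemma inn_part :
  exists psi : {perm T} -> Z * Z,
      {in Inn mul &, injective psi} /\ psi @: Inn mul = setT /\
      {in Inn mul &, forall p q, psi (p * q)%g = addZ2 (psi p) (psi q)}.
Proof.
exists psi; rewrite Inn_eq; split; [|split].
- move=> p q /imset2P [al be _ _ ->] /imset2P [ga de _ _ ->].
  by rewrite !psiE => [[-> ->]].
- apply/setP => [[al be]]; rewrite inE; apply/imsetP.
  exists (MP al be); last by rewrite psiE.
  by apply/imset2P; exists al be.
- move=> p q /imset2P [al be _ _ ->] /imset2P [ga de _ _ ->].
  by rewrite MP_mul !psiE.
Qed.


Lemma sum_step (x : Z) m :
  \sum_(1 <= k < m.+1) ovf x (x *+ k) = \sum_(1 <= k < m) ovf x (x *+ k) + ovf x (x *+ m).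
Proof.
case: m => [|m]; first by rewrite !big_geq // mulr0n ovf0 addr0.
by rewrite big_nat_recr.
Qed.

Lemma bin2lem m : (2 * 'C(m.+1, 2) = m.+1 * m)%N.
Proof.
elim: m => [|m IH] //.
rewrite binS bin1 mulnDr IH.
rewrite -!multE -!plusE; nia.
Qed.

Lemma qexpE x1 x2 x3 m : qexp mul (0, 0, 0) (x1, x2, x3) m =
  (x1 *+ m + 2 * ('C(m.+1, 3))%:R * x2 * x3 ^+ 2
     + a * \sum_(1 <= k < m) ovf x2 (x2 *+ k) + b * \sum_(1 <= k < m) ovf x3 (x3 *+ k),
   x2 *+ m, x3 *+ m).
Proof.
elim: m => [|m IH].
  rewrite /qexp /= !big_geq // bin_small //; congr (_,_,_); zring.
rewrite /qexp iterS -[iter _ _ _]/(qexp mul (0, 0, 0) (x1, x2, x3) m) IH mulE.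
rewrite !sum_step (ovfC (x2 *+ m)) (ovfC (x3 *+ m)) (binS m.+1 2) natrD (mulrDr 2).
have h : (2 : Z) * ('C(m.+1, 2))%:R = (m.+1)%:R * m%:R by rewrite -natrM bin2lem natrM.
rewrite h (mulrSr x1) (mulrSr x2) (mulrSr x3) (mulrSr (1 : Z) m) expr2.
set S2 := \sum_(1 <= k < m) _; set S3 := \sum_(1 <= k < m) _; congr (_,_,_); zring.
Qed.

Lemma cardT : #|[set: T]| = (N ^ 3)%N.
Proof. by rewrite cardsT !card_prod card_ord /= expnS expnS expn1 mulnA. Qed.

Lemma nonassoc : ~ associative_op mul.
Proof.
move=> H; move: (H (0, 0, 1) (0, 0, 1) (0, 1, 0)) => /eqP.
rewrite assoc_iff /adef /= !mul1r mulr0 subr0 => /eqP h.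
by move: one_neq0; rewrite h eqxx.
Qed.

End S.

Theorem proposition5p4 (n : nat) (a b : 'Z_n) : (1 < n)%N ->
  let mul := @mulQ n a b in
  let e : Qt n := (0, 0, 0) in
  (* (i) *)
  (forall x1 x2 x3 y1 y2 y3 : 'Z_n,
     ldiv mul (x1, x2, x3) (y1, y2, y3) =
       (y1 - x1 - (y3 - x3) * x3 * y2 - a * ovf x2 (y2 - x2) - b * ovf x3 (y3 - x3),
        y2 - x2, y3 - x3)) /\
  (* (ii) *)
  (forall x1 x2 x3 y1 y2 y3 z1 z2 z3 : 'Z_n,
     let x := (x1, x2, x3) in let y := (y1, y2, y3) in let z := (z1, z2, z3) in
     ldiv mul (mul x y) (mul x (mul y z)) = (z1 + y3 * (x3 * z2 - x2 * z3), z2, z3)) /\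
  (* (iii) *)
  (is_Aloop mul e /\ commutative_op mul /\ ~ associative_op mul /\
   #|[set: Qt n]| = (n ^ 3)%N) /\
  (* (iv) *)
  (Nlam mul = [set x : Qt n | (x.1.2 == 0) && (x.2 == 0)] /\
   Zc mul = [set x : Qt n | (x.1.2 == 0) && (x.2 == 0)] /\
   Nmu mul = [set x : Qt n | x.2 == 0]) /\
  (* (v) *)
  ((exists phi : {set Qt n} -> 'Z_n * 'Z_n,
      {in quotZ mul &, injective phi} /\ phi @: quotZ mul = setT /\
      (forall x y, phi (zcoset mul (mul x y)) =
                   addZ2 (phi (zcoset mul x)) (phi (zcoset mul y)))) /\
   (exists psi : {perm Qt n} -> 'Z_n * 'Z_n,
      {in Inn mul &, injective psi} /\ psi @: Inn mul = setT /\
      {in Inn mul &, forall p q, psi (p * q)%g = addZ2 (psi p) (psi q)}) /\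
   Inn mul = Lset mul) /\
  (* (vi) *)
  (forall (x1 x2 x3 : 'Z_n) (m : nat),
     let t2 := \sum_(1 <= k < m) ovf x2 (x2 *+ k) in
     let t3 := \sum_(1 <= k < m) ovf x3 (x3 *+ k) in
     qexp mul e (x1, x2, x3) m =
       (x1 *+ m + 2 * ('C(m.+1, 3))%:R * x2 * x3 ^+ 2 + a * t2 + b * t3,
        x2 *+ m, x3 *+ m)).
Proof.
case: n a b => [|[|n']] // a b _.
cbv zeta.
split; [exact: part1|].
split.
  by move=> x1 x2 x3 y1 y2 y3 z1 z2 z3; rewrite part2.
split.
  split; [split; [exact: loopP | exact: Inn_aut]|].
  split; [exact: mulC|].
  split; [exact: nonassoc | exact: cardT].
split.
  split; [exact: Nlam_eq|]; split; [exact: Zc_eq | exact: Nmu_eq].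
split.
  split; [exact: quot_part|]; split; [exact: inn_part|].
  by rewrite Inn_eq Lset_eq.
exact: qexpE.
Qed.
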